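(* The matrix $U_3=\frac{1}{\sqrt3}\left(I_2^{\otimes 3}+i\,\sigma_1^{\otimes 3}+i\,\sigma_3^{\otimes 3}\right)$ on $\mathbb{C}^2\otimes\mathbb{C}^2\otimes\mathbb{C}^2$ is unitary and $\mathrm{sr}(U_3)=3$.
   Context: $I_2$ is the $2\times2$ identity, $\sigma_1=\begin{bmatrix}0&1\\1&0\end{bmatrix}$, $\sigma_3=\begin{bmatrix}1&0\\0&-1\end{bmatrix}$. For a matrix $U$ on $\mathbb{C}^2\otimes\mathbb{C}^2\otimes\mathbb{C}^2$ (systems $A,B,C$), its Schmidt rank $\mathrm{sr}(U)$ is the least integer $r$ such that $U=\sum_{j=1}^r A_j\otimes B_j\otimes C_j$ with $A_j,B_j,C_j$ complex $2\times 2$ matrices (i.e. the tensor rank of $U$). *)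

(* Defs.v *)
From HB Require Import structures.
From mathcomp Require Import all_boot all_order all_algebra.
From mathcomp Require Import mxtens.
Set Implicit Arguments. Unset Strict Implicit. Unset Printing Implicit Defensive.
Import Order.TTheory GRing.Theory Num.Theory.
Local Open Scope ring_scope.

(* The three-qubit space C^2 (x) C^2 (x) C^2 is
   represented by 'M_((2*2)*2) with the Kronecker ordering A (x) B (x) C. *)

Section Defs.
Variable C : numClosedFieldType.

Definition tens3 (A B D : 'M[C]_2) : 'M[C]_(2 * 2 * 2) := tensmx (tensmx A B) D.

Definition I2 : 'M[C]_2 := 1%:M.
Definition sigma1 : 'M[C]_2 := \matrix_(i < 2, j < 2) (if i == j then 0 else 1).
Definition sigma3 : 'M[C]_2 :=
  \matrix_(i < 2, j < 2) (if i == j then (if i == 0 :> nat then 1 else -1) else 0).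

Definition adjmx m n (M : 'M[C]_(m, n)) : 'M[C]_(n, m) := map_mx Num.conj (M^T).

Definition unitary n (U : 'M[C]_n) : Prop :=
  U *m adjmx U = 1%:M /\ adjmx U *m U = 1%:M.

Definition tens_decomp_le (U : 'M[C]_(2 * 2 * 2)) (r : nat) : Prop :=
  exists (A B D : 'I_r -> 'M[C]_2), U = \sum_(j < r) tens3 (A j) (B j) (D j).

Definition schmidt_rank_eq (U : 'M[C]_(2 * 2 * 2)) (r : nat) : Prop :=
  tens_decomp_le U r /\ forall r', (r' < r)%N -> ~ tens_decomp_le U r'.

Definition U3 : 'M[C]_(2 * 2 * 2) :=
  (sqrtC 3)^-1 *: (tens3 I2 I2 I2 + 'i *: tens3 sigma1 sigma1 sigma1
                                     + 'i *: tens3 sigma3 sigma3 sigma3).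
End Defs.

(* Main.v *)
Require Import Defs.
From HB Require Import structures.
From mathcomp Require Import all_boot all_order all_algebra.
From mathcomp Require Import mxtens ring.
Import Order.TTheory GRing.Theory Num.Theory.
Local Open Scope ring_scope.
Section S.
Variable C : numClosedFieldType.
Implicit Types A B D : 'M[C]_2.

Lemma tens3_mul A B D A' B' D' :
  tens3 A B D *m tens3 A' B' D' = tens3 (A *m A') (B *m B') (D *m D').
Proof. by rewrite /tens3 !tensmx_mul. Qed.

Lemma adjmx_tens3 A B D : adjmx (tens3 A B D) = tens3 (adjmx A) (adjmx B) (adjmx D).
Proof. by rewrite /adjmx /tens3 !trmx_tens !map_mxT. Qed.

Lemma adjmx_lin n (a : C) (M N : 'M[C]_n) : adjmx (M + a *: N) = adjmx M + a^* *: adjmx N.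
Proof. by apply/matrixP=> i j; rewrite !mxE rmorphD rmorphM. Qed.

Lemma adjmx_scale n (a : C) (M : 'M[C]_n) : adjmx (a *: M) = a^* *: adjmx M.
Proof. by apply/matrixP=> i j; rewrite !mxE rmorphM. Qed.

Lemma adj_I2 : adjmx (I2 C) = I2 C.
Proof. by apply/matrixP=> i j; rewrite !mxE rmorph_nat eq_sym. Qed.

Lemma adj_s1 : adjmx (sigma1 C) = sigma1 C.
Proof. apply/matrixP=> i j; rewrite !mxE.
by case: i => [[|[|i]] Hi] //; case: j => [[|[|j]] Hj] //=; rewrite ?rmorph1 ?rmorph0 ?rmorphN ?rmorph1.
Qed.

Lemma adj_s3 : adjmx (sigma3 C) = sigma3 C.
Proof. apply/matrixP=> i j; rewrite !mxE.
by case: i => [[|[|i]] Hi] //; case: j => [[|[|j]] Hj] //=; rewrite ?rmorph1 ?rmorph0 ?rmorphN ?rmorph1.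
Qed.

Lemma m2E A B : A *m B = \matrix_(i, j) (A i 0 * B 0 j + A i 1 * B 1 j).
Proof. apply/matrixP=> i j; rewrite !mxE !big_ord_recr big_ord0 /= add0r.
by congr (_ + _); congr (A i _ * B _ j); apply: val_inj. Qed.

Lemma s1s1 : sigma1 C *m sigma1 C = I2 C.
Proof. rewrite m2E; apply/matrixP=> i j; rewrite !mxE.
by case: i => [[|[|i]] Hi] //; case: j => [[|[|j]] Hj] //=; rewrite ?mulr0 ?mul0r ?mulr1 ?addr0 ?add0r.
Qed.
Lemma s3s3 : sigma3 C *m sigma3 C = I2 C.
Proof. rewrite m2E; apply/matrixP=> i j; rewrite !mxE.
by case: i => [[|[|i]] Hi] //; case: j => [[|[|j]] Hj] //=; rewrite ?mulr0 ?mul0r ?mulr1 ?addr0 ?add0r ?mulrNN ?mulr1.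
Qed.
Lemma s1s3 : sigma1 C *m sigma3 C = - (sigma3 C *m sigma1 C).
Proof. rewrite !m2E; apply/matrixP=> i j; rewrite !mxE.
case: i => [[|[|i]] Hi] //; case: j => [[|[|j]] Hj] //=.
all: ring.
Qed.

Lemma key n (a : C) (X Z : 'M[C]_n) : X *m X = 1%:M -> Z *m Z = 1%:M ->
  X *m Z = - (Z *m X) ->
  (1%:M + a *: X + a *: Z) *m (1%:M + (- a) *: X + (- a) *: Z) = (1 - (a ^+ 2) *+ 2) *: 1%:M.
Proof.
move=> hX hZ hXZ.
rewrite !mulmxDl !mulmxDr !mul1mx !mulmx1 -!scalemxAl -!scalemxAr !scalerA hX hZ hXZ.
apply/matrixP=> i j; rewrite !mxE; ring.
Qed.

Lemma tens3_1 : tens3 (I2 C) (I2 C) (I2 C) = 1%:M.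
Proof.
apply/matrixP=> i j.
case: (mxtens_indexP i) => i12 i3; case: (mxtens_indexP i12) => i1 i2.
case: (mxtens_indexP j) => j12 j3; case: (mxtens_indexP j12) => j1 j2.
rewrite /tens3 !tensmxE !mxE !(inj_eq (can_inj (@mxtens_indexK _ _))) !xpair_eqE.
rewrite !(inj_eq (can_inj (@mxtens_indexK _ _))) !xpair_eqE.
by case: (i1 == j1); case: (i2 == j2); case: (i3 == j3); rewrite /= ?mulr1 ?mulr0 ?mul0r.
Qed.

Lemma U3_unitary : unitary (U3 C).
Proof.
set s : C := (sqrtC 3)^-1.
have hs : s * s * (1 - ('i ^+ 2) *+ 2) = 1 :> C.
  rewrite sqrCi /s -invfM -expr2 sqrtCK.
  have -> : (1 - (-1) *+ 2 : C) = 3 by rewrite mulNrn opprK; ring.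
  by rewrite mulVf // pnatr_eq0.
have hsc : s^* = s.
  by rewrite /s fmorphV; congr (_^-1); apply: geC0_conj; rewrite sqrtC_ge0 ler0n.
set X := tens3 (sigma1 C) (sigma1 C) (sigma1 C).
set Z := tens3 (sigma3 C) (sigma3 C) (sigma3 C).
have hX : X *m X = 1%:M by rewrite /X tens3_mul s1s1 tens3_1.
have hZ : Z *m Z = 1%:M by rewrite /Z tens3_mul s3s3 tens3_1.
have hXZ : X *m Z = - (Z *m X).
  rewrite /X /Z !tens3_mul s1s3.
  by apply/matrixP=> i j; rewrite /tens3 !mxE; ring.
have hU : U3 C = s *: (1%:M + 'i *: X + 'i *: Z) by rewrite /U3 tens3_1.
have hA : adjmx (U3 C) = s *: (1%:M + (- 'i) *: X + (- 'i) *: Z).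
  rewrite hU adjmx_scale !adjmx_lin hsc conjCi !adjmx_tens3 adj_s1 adj_s3.
  by rewrite -tens3_1 adjmx_tens3 adj_I2.
split; rewrite hA hU -scalemxAl -scalemxAr scalerA.
  by rewrite key // scalerA hs scale1r.
have := @key _ (- 'i) _ _ hX hZ hXZ; rewrite opprK sqrrN => ->.
by rewrite scalerA hs scale1r.
Qed.

Definition o0 : 'I_2 := @Ordinal 2 0 isT.
Definition o1 : 'I_2 := @Ordinal 2 1 isT.
Definition idx3 (i1 i2 i3 : 'I_2) : 'I_(2 * 2 * 2) := mxtens_index (mxtens_index (i1, i2), i3).

Lemma entry_tens3 A B D i1 i2 i3 j1 j2 j3 :
  tens3 A B D (idx3 i1 i2 i3) (idx3 j1 j2 j3) = A i1 j1 * B i2 j2 * D i3 j3.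
Proof. by rewrite /tens3 /idx3 !tensmxE. Qed.

Lemma entry_sum r (A B D : 'I_r -> 'M[C]_2) i1 i2 i3 j1 j2 j3 :
  (\sum_(j < r) tens3 (A j) (B j) (D j)) (idx3 i1 i2 i3) (idx3 j1 j2 j3) =
  \sum_(j < r) A j i1 j1 * B j i2 j2 * D j i3 j3.
Proof. by rewrite summxE; apply: eq_bigr => j _; rewrite entry_tens3. Qed.

Lemma entry_U3 i1 i2 i3 j1 j2 j3 :
  U3 C (idx3 i1 i2 i3) (idx3 j1 j2 j3) = (sqrtC 3)^-1 *
   (I2 C i1 j1 * I2 C i2 j2 * I2 C i3 j3
    + 'i * (sigma1 C i1 j1 * sigma1 C i2 j2 * sigma1 C i3 j3)
    + 'i * (sigma3 C i1 j1 * sigma3 C i2 j2 * sigma3 C i3 j3)).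
Proof.
have H (a b : C) (M1 M2 M3 : 'M[C]_(2 * 2 * 2)) x y :
  (a *: (M1 + b *: M2 + b *: M3)) x y = a * (M1 x y + b * M2 x y + b * M3 x y).
  by rewrite !mxE.
by rewrite /U3 H !entry_tens3.
Qed.

Definition det3 (a b c d e f g h k : C) :=
  a * (e * k - f * h) - b * (d * k - f * g) + c * (d * h - e * g).

End S.
Arguments det3 {C}.

Theorem mainTheorem3 (C : numClosedFieldType) :
  unitary (U3 C) /\ schmidt_rank_eq (U3 C) 3.
Proof.
split; first exact: U3_unitary.
split.
  exists (fun j : 'I_3 => nth (I2 C) [:: I2 C; sigma1 C; sigma3 C] j).
  exists (fun j : 'I_3 => nth (I2 C) [:: I2 C; sigma1 C; sigma3 C] j).
  exists (fun j : 'I_3 => (nth 1 [:: 1; 'i; 'i] j * (sqrtC 3)^-1) *: nth (I2 C) [:: I2 C; sigma1 C; sigma3 C] j).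
  rewrite !big_ord_recl big_ord0 addr0 /= /U3 !scalerDr.
  apply/matrixP=> i j.
  case: (mxtens_indexP i) => i12 i3; case: (mxtens_indexP i12) => i1 i2.
  case: (mxtens_indexP j) => j12 j3; case: (mxtens_indexP j12) => j1 j2.
  rewrite /tens3 !(mxE, mxtens_indexK) /=; ring.
move=> r hr [A [B [D hU]]].
pose u i1 j1 i2 j2 i3 j3 := U3 C (idx3 i1 i2 i3) (idx3 j1 j2 j3).
have H1 : det3 (u o0 o0 o0 o0 o0 o0) (u o0 o0 o0 o1 o0 o1) (u o0 o0 o0 o0 o1 o1)
               (u o0 o1 o0 o0 o0 o0) (u o0 o1 o0 o1 o0 o1) (u o0 o1 o0 o0 o1 o1)
               (u o1 o1 o0 o0 o0 o0) (u o1 o1 o0 o1 o0 o1) (u o1 o1 o0 o0 o1 o1)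
          = 4 * (sqrtC 3)^-1 ^+ 3 * 'i ^+ 2.
  rewrite /u !entry_U3 !mxE /= /det3.
  ring.
have H2 : det3 (u o0 o0 o0 o0 o0 o0) (u o0 o0 o0 o1 o0 o1) (u o0 o0 o0 o0 o1 o1)
               (u o0 o1 o0 o0 o0 o0) (u o0 o1 o0 o1 o0 o1) (u o0 o1 o0 o0 o1 o1)
               (u o1 o1 o0 o0 o0 o0) (u o1 o1 o0 o1 o0 o1) (u o1 o1 o0 o0 o1 o1) = 0.
  rewrite /u hU !entry_sum /det3.
  clear H1; case: r hr A B D {hU u} => [|[|[|r]]] // _ A B D; rewrite ?big_ord0 ?big_ord_recl ?big_ord0; ring.
move: H1; rewrite H2 sqrCi => /eqP; apply/negP.
rewrite eq_sym mulrN1 oppr_eq0 mulf_neq0 // ?pnatr_eq0 // expf_neq0 // invr_eq0 sqrtC_eq0 pnatr_eq0 //.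
Qed.
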